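(* A (possibly infinite) tree $T$ is cat-win if and only if $T$ contains the infinite complete binary tree $B^{\omega}$ as a minor.
   Context: Cat Herding is played on a simple, possibly infinite graph $G$. The cat first places its token on a vertex. Then the players alternate, the herder moving first: the herder deletes one edge of the current graph, and then, unless the cat's current vertex has degree $0$ in the current graph, the cat moves its token along a finite path with at least one edge in the current graph to a different vertex. The cat is captured when its vertex has degree $0$ in the current graph. $G$ is cat-win if the cat has a strategy (including the choice of starting vertex) that is never captured, and herder-win if the herder has a strategy that eventually captures the cat. $B^{\omega}$ is the graph with vertex set $\{L,R\}^*$ (all finite words over $\{L,R\}$) and edges between $\alpha$ and $\alpha t$ for all $\alpha\in\{L,R\}^*$, $t\in\{L,R\}$. *)

(* Defs.v *)
From Stdlib Require Import List Relations.
Import ListNotations.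

Section Graphs.
Variable V : Type.
Variable adj : V -> V -> Prop.

Definition simple_graph : Prop :=
  (forall x y, adj x y -> adj y x) /\ (forall x, ~ adj x x).

Fixpoint walk (x : V) (l : list V) : Prop :=
  match l with
  | [] => True
  | y :: t => adj x y /\ walk y t
  end.

Definition has_cycle : Prop :=
  exists (x : V) (l : list V),
    NoDup (x :: l) /\ 2 <= length l /\ walk x l /\ adj (last l x) x.

Definition connected : Prop := forall u v, clos_refl_trans V adj u v.

Definition is_tree : Prop := simple_graph /\ connected /\ ~ has_cycle.

(* A history is the list of edges deleted so far, most recent first. *)
Definition history := list (V * V).

Definition cur_adj (h : history) (x y : V) : Prop :=
  adj x y /\ ~ In (x, y) h /\ ~ In (y, x) h.

Inductive legal_history : history -> Prop :=
  | legal_nil : legal_history []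
  | legal_cons : forall h a b,
      legal_history h -> cur_adj h a b -> legal_history ((a, b) :: h).

(* A cat strategy: a starting vertex c0 and a move function sigma giving the
   cat's new vertex after the herder's deletions h (the cat's own past moves
   are determined by the herder's deletions). *)
Definition cat_pos (c0 : V) (sigma : history -> V) (h : history) : V :=
  match h with [] => c0 | _ => sigma h end.

(* The strategy is never captured: the start vertex is not isolated, and after
   any legal sequence of herder deletions ending with the deletion of an edge e
   of the current graph, the cat's vertex still has positive degree and the
   prescribed move is to a different vertex reachable by a path with at least
   one edge in the current graph. *)
Definition cat_strategy_wins (c0 : V) (sigma : history -> V) : Prop :=
  (exists y, adj c0 y) /\
  forall (h : history) (a b : V),
    legal_history h -> cur_adj h a b ->
    let p := cat_pos c0 sigma h in
    let h' := (a, b) :: h in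
    (exists y, cur_adj h' p y) /\
    sigma h' <> p /\
    clos_trans V (cur_adj h') p (sigma h').

Definition cat_win : Prop :=
  exists (c0 : V) (sigma : history -> V), cat_strategy_wins c0 sigma.

End Graphs.

Definition is_minor (W : Type) (adjH : W -> W -> Prop)
                    (V : Type) (adjG : V -> V -> Prop) : Prop :=
  exists B : W -> V -> Prop,
    (forall w, exists v, B w v) /\
    (forall w w' v, B w v -> B w' v -> w = w') /\
    (forall w u v, B w u -> B w v ->
       clos_refl_trans V (fun x y => adjG x y /\ B w x /\ B w y) u v) /\
    (forall w w', adjH w w' -> exists u v, B w u /\ B w' v /\ adjG u v).

Inductive LR := L | R.

Definition Bomega_adj (a b : list LR) : Prop :=
  (exists t, b = a ++ [t]) \/ (exists t, a = b ++ [t]).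

(* Submission.v *)
Require Import Defs.
From Stdlib Require Import List Relations Classical ClassicalEpsilon Lia.
Import ListNotations.
Arguments last : simpl nomatch.


Section Gen.
Context {V : Type}.
Notation crt := (clos_refl_trans V).

Lemma crt_rev (R : V -> V -> Prop) : (forall a b, R a b -> R b a) ->
  forall a b, crt R a b -> crt R b a.
Proof. intros Hs a b H; induction H; eauto using clos_refl_trans. Qed.

Lemma crt_mono (R S : V -> V -> Prop) : (forall a b, R a b -> S a b) ->
  forall a b, crt R a b -> crt S a b.
Proof. intros Hs a b H; induction H; eauto using clos_refl_trans. Qed.

Lemma crossing (R : V -> V -> Prop) (Y : V -> Prop) a b : crt R a b -> Y a -> ~ Y b ->
  exists a1 b1, crt R a a1 /\ R a1 b1 /\ Y a1 /\ ~ Y b1.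
Proof.
  intro H. apply clos_rt_rt1n in H. induction H as [x|x y z Hxy Hyz IH]; intros Ha Hb.
  - contradiction.
  - destruct (classic (Y y)) as [Hy|Hy].
    + destruct (IH Hy Hb) as (a1&b1&H1&H2&H3&H4). exists a1, b1.
      split; [eapply rt_trans; [apply rt_step; exact Hxy| exact H1]| auto].
    + exists x, y. repeat split; auto. apply rt_refl.
Qed.

Lemma first_step (R : V -> V -> Prop) a u : crt R a u -> a <> u ->
  exists z, R a z /\ crt (fun p q => R p q /\ p <> a /\ q <> a) z u.
Proof.
  intros H. apply clos_rt_rtn1 in H. induction H as [|u' u Hr H IH]; intros Hne.
  - congruence.
  - destruct (classic (u' = a)) as [->|Hne'].
    + exists u; split; auto. apply rt_refl.
    + destruct (IH (not_eq_sym Hne')) as (z&Hz&Hc). exists z; split; auto.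
      eapply rt_trans; [exact Hc| apply rt_step; auto].
Qed.

Lemma crt_restrict (R : V -> V -> Prop) d u : crt R d u ->
  crt (fun a b => R a b /\ crt R d a /\ crt R d b) d u.
Proof.
  intros H. pose proof H as H0. apply clos_rt_rtn1 in H. induction H as [|y z Hyz H IH].
  - apply rt_refl.
  - assert (Hy : crt R d y) by (apply clos_rtn1_rt; exact H).
    eapply rt_trans; [apply IH; exact Hy| apply rt_step; repeat split; auto].
Qed.

Lemma avoid_end (R : V -> V -> Prop) p q w :
  crt (fun a b => R a b /\ a <> p /\ b <> p) q w -> q <> p -> w <> p.
Proof. intros H; apply clos_rt_rtn1 in H; destruct H as [|y z Hyz H]; tauto. Qed.

Fixpoint pairs (x : V) (l : list V) : list (V * V) :=
  match l with [] => [] | y :: t => (x, y) :: pairs y t end.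

Lemma last_cons (a b : V) l : last (b :: l) a = last l b.
Proof. revert a b; induction l as [|c l IH]; intros; [reflexivity|].
  change (last (c::l) a = last (c::l) b). rewrite !IH. reflexivity. Qed.

Lemma walk_crt (R : V -> V -> Prop) a l : walk V R a l -> crt R a (last l a).
Proof.
  revert a; induction l as [|y l IH]; intros a Hw.
  - apply rt_refl.
  - destruct Hw as [H1 H2]. eapply rt_trans; [apply rt_step; exact H1|].
    rewrite last_cons. apply IH; auto.
Qed.


Lemma walk_app (R : V -> V -> Prop) a l1 l2 :
  walk V R a (l1 ++ l2) <-> walk V R a l1 /\ walk V R (last l1 a) l2.
Proof.
  revert a; induction l1 as [|y l IH]; intros a; simpl.
  - tauto.
  - rewrite IH. rewrite last_cons. tauto.
Qed.

Lemma nodup_snoc (l : list V) z : NoDup l -> ~ In z l -> NoDup (l ++ [z]).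
Proof.
  induction l as [|y l IH]; intros Hn Hz; simpl.
  - constructor; auto.
  - inversion Hn; subst. constructor.
    + rewrite in_app_iff; simpl. intros [H|[H|H]]; auto. apply Hz; left; auto.
    + apply IH; auto. intro; apply Hz; right; auto.
Qed.

Lemma walk_nodup (R : V -> V -> Prop) a b : crt R a b ->
  exists l, walk V R a l /\ last l a = b /\ NoDup (a :: l).
Proof.
  intros H; apply clos_rt_rtn1 in H; induction H as [|y z Hyz H IH].
  - exists []; simpl; repeat split; auto. constructor; auto. constructor.
  - destruct IH as (l & Hw & Hl & Hn).
    destruct (classic (In z (a :: l))) as [Hin|Hin].
    + destruct Hin as [Hin|Hin].
      * subst z. exists []; simpl; repeat split; auto. constructor; auto. constructor.
      * apply in_split in Hin. destruct Hin as (l1 & l2 & ->).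
        exists (l1 ++ [z]). apply walk_app in Hw. destruct Hw as [Hw1 Hw2].
        repeat split.
        -- apply walk_app. split; auto. simpl in Hw2 |- *. tauto.
        -- apply last_last.
        -- apply (NoDup_app_remove_r _ l2). simpl. rewrite <- app_assoc. simpl. exact Hn.
    + exists (l ++ [z]). repeat split.
      * apply walk_app. split; auto. rewrite Hl. simpl; auto.
      * apply last_last.
      * change (NoDup ((a :: l) ++ [z])). apply nodup_snoc; auto.
Qed.

Lemma crt_walk (R : V -> V -> Prop) a b : crt R a b -> exists l, walk V R a l /\ last l a = b.
Proof. intro H. destruct (walk_nodup R a b H) as (l&?&?&?). eauto. Qed.

Lemma walk_in (R : V -> V -> Prop) a l v : walk V R a l -> In v l -> exists u, R u v.
Proof.
  revert a; induction l as [|y l IH]; intros a Hw Hin; simpl in *; [contradiction|].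
  destruct Hw as [H1 H2]. destruct Hin as [->|Hin]; eauto.
Qed.

Lemma pairs_in2 a l p q : In (p, q) (pairs a l) -> In q l.
Proof.
  revert a; induction l as [|y l IH]; intros a H; simpl in *; [contradiction|].
  destruct H as [H|H]; [inversion H; auto| right; eapply IH; eauto].
Qed.

Lemma walk_avoid (R : V -> V -> Prop) z l u : walk V R z l -> ~ In u (z :: l) ->
  crt (fun a b => R a b /\ a <> u /\ b <> u) z (last l z).
Proof.
  revert z; induction l as [|y l IH]; intros z Hw Hu; simpl in *.
  - apply rt_refl.
  - destruct Hw as [H1 H2]. eapply rt_trans; [apply rt_step; repeat split; eauto|].
    rewrite last_cons. apply IH; auto.
Qed.

Lemma NL (R : V -> V -> Prop) u l p q : walk V R u l -> NoDup (u :: l) ->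
  In (p, q) (pairs u l) ->
  crt (fun a b => R a b /\ a <> q /\ b <> q) u p /\
  crt (fun a b => R a b /\ a <> p /\ b <> p) q (last l u).
Proof.
  revert u; induction l as [|z l IH]; intros u Hw Hn Hin; simpl in *; [contradiction|].
  destruct Hw as [H1 H2]. rewrite last_cons.
  destruct Hin as [Heq|Hin].
  - inversion Heq; subst. split; [apply rt_refl|].
    apply walk_avoid; auto. inversion Hn; auto.
  - inversion Hn as [|? ? Hu Hn']; subst. inversion Hn' as [|? ? Hz Hn'']; subst.
    destruct (IH z H2 Hn' Hin) as [IH1 IH2]. split; auto.
    pose proof (pairs_in2 _ _ _ _ Hin) as Hq.
    eapply rt_trans; [apply rt_step; repeat split; eauto|]; auto.
    + intro; subst; apply Hu; right; auto.
    + intro; subst; apply Hz; auto.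
Qed.

Lemma list_cross (R : V -> V -> Prop) (Y : V -> Prop) y W : walk V R y W -> ~ Y y -> Y (last W y) ->
  exists a b, In (a, b) (pairs y W) /\ ~ Y a /\ Y b /\ R a b.
Proof.
  revert y; induction W as [|z W IH]; intros y Hw Hy HY; simpl in *; [contradiction|].
  destruct Hw as [H1 H2]. rewrite last_cons in HY.
  destruct (classic (Y z)) as [Hz|Hz].
  - exists y, z; auto.
  - destruct (IH z H2 Hz HY) as (a&b&?&?&?&?). exists a, b; auto.
Qed.

Lemma walk_strengthen (R S : V -> V -> Prop) u l : walk V R u l ->
  (forall a b, In (a, b) (pairs u l) -> S a b) -> walk V (fun a b => R a b /\ S a b) u l.
Proof.
  revert u; induction l as [|z l IH]; intros u Hw HS; simpl in *; auto.
  destruct Hw; split; auto.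
Qed.

Lemma walk_mono (R S : V -> V -> Prop) a l : (forall x y, R x y -> S x y) ->
  walk V R a l -> walk V S a l.
Proof. intros HS; revert a; induction l; intros a0 Hw; simpl in *; auto. destruct Hw; split; auto. Qed.

Lemma ct_crt (R : V -> V -> Prop) a b : clos_trans V R a b -> crt R a b.
Proof. intros H; induction H; eauto using clos_refl_trans. Qed.

End Gen.


Section Tree.
Variable V : Type.
Variable adj : V -> V -> Prop.
Hypothesis Hsym : forall x y, adj x y -> adj y x.
Hypothesis Hirr : forall x, ~ adj x x.
Hypothesis Hacyc : ~ has_cycle V adj.
Notation crt := (clos_refl_trans V).

Definition Av (p q : V) (a b : V) : Prop := adj a b /\ ~ (a = p /\ b = q) /\ ~ (a = q /\ b = p).
Definition Br (p q : V) (v : V) : Prop := crt (Av p q) q v.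

Lemma Av_sym p q a b : Av p q a b -> Av p q b a.
Proof. unfold Av; intros (H1&H2&H3); repeat split; auto; intros [? ?]; subst; tauto. Qed.

Lemma Av_swap p q a b : Av p q a b -> Av q p a b.
Proof. unfold Av; tauto. Qed.

Lemma Br_refl p q : Br p q q.
Proof. apply rt_refl. Qed.

Lemma Br_trans p q u v : Br p q u -> crt (Av p q) u v -> Br p q v.
Proof. intros; eapply rt_trans; eauto. Qed.

Lemma Br_back p q u v : Br p q v -> crt (Av p q) u v -> Br p q u.
Proof. intros H1 H2. eapply rt_trans; [exact H1|]. apply crt_rev; auto. apply Av_sym. Qed.

Lemma F p q : adj p q -> ~ Br p q p.
Proof.
  intros Hpq H. apply Hacyc.
  apply crt_rev in H; [|apply Av_sym].
  destruct (first_step _ _ _ H) as (z & Hz & Hc).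
  { intro; subst; eapply Hirr; eauto. }
  destruct (walk_nodup _ _ _ Hc) as (l & Hw & Hl & Hn).
  exists p, (z :: l). destruct Hz as (Hz1&Hz2&Hz3).
  assert (Hzq : z <> q) by (intro; subst; tauto).
  split; [|split; [|split]].
  - constructor.
    + intros [H0|H0]; [subst; eapply Hirr; eauto|].
      destruct (walk_in _ _ _ _ Hw H0) as (u & _ & _ & Hu). congruence.
    + exact Hn.
  - destruct l as [|w l]; [simpl in Hl; congruence| simpl; lia].
  - simpl. split; auto. eapply walk_mono; [|exact Hw]. intros a b H0; exact (proj1 (proj1 H0)).
  - rewrite last_cons. rewrite Hl. apply Hsym; auto.
Qed.

Lemma Av_swap_crt p q u v : crt (Av p q) u v -> crt (Av q p) u v.
Proof. apply crt_mono. intros; apply Av_swap; auto. Qed.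

Lemma DJ p q v : adj p q -> Br p q v -> Br q p v -> False.
Proof.
  intros Hpq H1 H2. apply (F p q Hpq). eapply Br_back; [exact H1|].
  apply Av_swap_crt. exact H2.
Qed.

Lemma edge_in p q a b : adj a b -> ~ Br p q a -> Br p q b -> a = p /\ b = q.
Proof.
  intros Hab Ha Hb. destruct (classic (a = p /\ b = q)) as [H|H]; auto.
  exfalso. destruct (classic (a = q /\ b = p)) as [[-> ->]|H'].
  - apply Ha, Br_refl.
  - apply Ha. eapply Br_trans; [exact Hb|]. apply rt_step. repeat split; auto.
    + intros [-> ->]; tauto.
    + intros [-> ->]; tauto.
Qed.

Lemma edge_out p q a b : adj a b -> Br p q a -> ~ Br p q b -> a = q /\ b = p.
Proof. intros Hab Ha Hb. destruct (edge_in p q b a (Hsym _ _ Hab) Hb Ha); auto. Qed.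

Lemma CP p q v : connected V adj -> Br p q v \/ Br q p v.
Proof.
  intros Hc. specialize (Hc q v). apply clos_rt_rtn1 in Hc.
  induction Hc as [|y z Hyz H IH].
  - left; apply Br_refl.
  - destruct (classic ((y = p /\ z = q) \/ (y = q /\ z = p))) as [[[-> ->]|[-> ->]]|Hn].
    + left; apply Br_refl.
    + right; apply Br_refl.
    + destruct IH as [IH|IH]; [left|right]; eapply Br_trans; eauto; apply rt_step;
        repeat split; auto; intros [-> ->]; tauto.
Qed.

Lemma Br_avoid_vertex p q v : adj p q -> Br p q v ->
  crt (fun a b => adj a b /\ a <> p /\ b <> p) q v.
Proof.
  intros Hpq H. pose proof (crt_restrict _ _ _ H) as H'.
  eapply crt_mono; [|exact H']. intros a b (H1 & H2 & H3). split; [exact (proj1 H1)|].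
  split; intro; subst; eapply F; eauto.
Qed.

Lemma avoid_vertex_Br p q u v : crt (fun a b => adj a b /\ a <> p /\ b <> p) u v ->
  crt (Av p q) u v.
Proof.
  apply crt_mono. intros a b (H1&H2&H3). repeat split; auto; intros [? ?]; subst; tauto.
Qed.

Lemma SB r z1 z2 v : adj r z1 -> adj r z2 -> z1 <> z2 -> Br r z1 v -> Br r z2 v -> False.
Proof.
  intros H1 H2 Hne B1 B2.
  assert (Hz1 : Br r z2 z1).
  { eapply Br_back; [exact B2|]. apply avoid_vertex_Br. apply Br_avoid_vertex; auto. }
  destruct (edge_in r z2 r z1 H1 (F _ _ H2) Hz1) as [_ ?]. auto.
Qed.

End Tree.


Section Cat.
Variable V : Type.
Variable adj : V -> V -> Prop.
Hypothesis Hsym : forall x y, adj x y -> adj y x.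
Variable c0 : V.
Variable sigma : history V -> V.
Hypothesis Hwin : cat_strategy_wins V adj c0 sigma.
Notation crt := (clos_refl_trans V).
Notation G := (cur_adj V adj).
Notation legal := (legal_history V adj).

Definition pos (h : history V) := cat_pos V c0 sigma h.
Definition comp (h : history V) (v : V) := crt (G h) (pos h) v.

Lemma G_sym h a b : G h a b -> G h b a.
Proof. unfold cur_adj; intros (H1&H2&H3); auto. Qed.

Lemma G_adj h a b : G h a b -> adj a b.
Proof. unfold cur_adj; tauto. Qed.

Lemma G_cons e h a b : G (e :: h) a b -> G h a b.
Proof. unfold cur_adj; simpl; intros (H1&H2&H3); repeat split; auto. Qed.

Lemma G_app l h a b : G (l ++ h) a b -> G h a b.
Proof. induction l; simpl; auto. intros H; apply IHl; eapply G_cons; eauto. Qed.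

Lemma G_head a b h : ~ G ((a, b) :: h) a b.
Proof. unfold cur_adj; simpl; tauto. Qed.

Lemma G_head' a b h : ~ G ((a, b) :: h) b a.
Proof. unfold cur_adj; simpl; tauto. Qed.

Lemma legal_inv a b h : legal ((a, b) :: h) -> legal h /\ G h a b.
Proof. intros H; inversion H; subst; auto. Qed.

Lemma legal_app l h : legal (l ++ h) -> legal h.
Proof. induction l as [|[a b] l IH]; simpl; auto. intros H; apply IH, (legal_inv a b); auto. Qed.

Lemma move h a b : legal h -> G h a b ->
  pos ((a, b) :: h) <> pos h /\ clos_trans V (G ((a, b) :: h)) (pos h) (pos ((a, b) :: h)) /\
  exists y, G ((a, b) :: h) (pos h) y.
Proof.
  intros Hl Hab. destruct Hwin as [_ Hw]. destruct (Hw h a b Hl Hab) as (H1&H2&H3).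
  unfold pos; simpl. auto.
Qed.

Lemma has_edge h : legal h -> exists y, G h (pos h) y.
Proof.
  intros Hl. destruct h as [|[a b] h0].
  - destruct Hwin as [[y Hy] _]. exists y. unfold cur_adj; simpl; auto.
  - destruct (legal_inv _ _ _ Hl) as [Hl0 Hab].
    destruct (move _ _ _ Hl0 Hab) as (_&Hc&_).
    apply clos_trans_tn1 in Hc. destruct Hc as [y Hy|y z Hy _].
    + exists (pos h0); apply G_sym; auto.
    + exists y; apply G_sym; auto.
Qed.

Lemma step_pos a b h : legal ((a, b) :: h) -> crt (G ((a, b) :: h)) (pos h) (pos ((a, b) :: h)).
Proof.
  intros Hl. destruct (legal_inv _ _ _ Hl) as [Hl0 Hab].
  destruct (move _ _ _ Hl0 Hab) as (_&Hc&_). apply ct_crt; auto.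
Qed.

Lemma comp_mono_step a b h v : legal ((a, b) :: h) -> comp ((a, b) :: h) v -> comp h v.
Proof.
  intros Hl Hc. unfold comp in *. eapply rt_trans.
  - eapply crt_mono; [|apply step_pos; exact Hl]. intros; eapply G_cons; eauto.
  - eapply crt_mono; [|exact Hc]. intros; eapply G_cons; eauto.
Qed.

Lemma comp_mono l h v : legal (l ++ h) -> comp (l ++ h) v -> comp h v.
Proof.
  induction l as [|[a b] l IH]; simpl; auto. intros Hl Hc.
  apply IH; [apply (legal_inv a b); auto|]. eapply comp_mono_step; eauto.
Qed.

Lemma pos_reach l h : legal (l ++ h) -> crt (G h) (pos h) (pos (l ++ h)).
Proof. intros Hl. apply (comp_mono l h); auto. apply rt_refl. Qed.

Notation Br := (Br V adj).
Notation Av := (Av V adj).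

Lemma G_Av p q h a b : G ((p, q) :: h) a b -> Av q p a b.
Proof.
  unfold cur_adj; simpl; intros (H1&H2&H3). unfold Submission.Av. repeat split; auto.
  - intros [-> ->]; tauto.
  - intros [-> ->]; tauto.
Qed.

Lemma G_Av' p q h a b : G ((p, q) :: h) a b -> Av p q a b.
Proof. intros H; apply Av_swap, (G_Av p q h); auto. Qed.

Definition good_in (h : history V) (Y : V -> Prop) :=
  exists h', legal h' /\ forall v, comp h' v -> Y v /\ comp h v.

Lemma SL h e1 e2 : legal h -> G h e1 e2 ->
  exists z, G ((e1, e2) :: h) (pos h) z /\ good_in h (Br (pos h) z).
Proof.
  intros Hl He. set (h1 := (e1, e2) :: h).
  destruct (move _ _ _ Hl He) as (Hne & Hc & _). fold h1 in Hne, Hc.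
  destruct (first_step _ _ _ (ct_crt _ _ _ Hc) (not_eq_sym Hne)) as (z & Hz & Hcz).
  exists z. split; auto.
  assert (Hl1 : legal h1) by (constructor; auto).
  assert (Hl3 : legal ((pos h, z) :: h1)) by (constructor; auto).
  exists ((pos h, z) :: h1). split; auto. intros v Hv. split.
  - assert (Hb : Br (pos h) z (pos h1)).
    { unfold Br. eapply crt_mono; [|exact Hcz]. intros a b (H1&H2&H3).
      pose proof (G_adj _ _ _ H1). repeat split; auto; intros [? ?]; subst; tauto. }
    eapply Br_trans; [exact Hb|]. unfold comp in Hv.
    eapply crt_mono; [apply G_Av'|].
    eapply rt_trans; [apply (step_pos _ _ _ Hl3)|exact Hv].
  - apply (comp_mono [(pos h, z); (e1, e2)]); auto.
Qed.

Lemma PL h : legal h -> exists z1 z2, z1 <> z2 /\ adj (pos h) z1 /\ adj (pos h) z2 /\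
  good_in h (Br (pos h) z1) /\ good_in h (Br (pos h) z2).
Proof.
  intros Hl. destruct (has_edge h Hl) as [y1 Hy1].
  destruct (SL h _ _ Hl Hy1) as (z1 & Hz1 & G1).
  apply G_cons in Hz1.
  destruct (SL h _ _ Hl Hz1) as (z2 & Hz2 & G2).
  exists z1, z2. split; [|split; [|split]]; auto.
  - intro; subst. eapply G_head; eauto.
  - eapply G_adj; eauto.
  - eapply G_adj, G_cons; eauto.
Qed.

Hypothesis Hirr : forall x, ~ adj x x.
Hypothesis Hacyc : ~ has_cycle V adj.

Let Fx := F V adj Hsym Hirr Hacyc.
Let DJx := DJ V adj Hsym Hirr Hacyc.
Let EIx := edge_in V adj Hsym.
Let EOx := edge_out V adj Hsym.
Let SBx := SB V adj Hsym Hirr Hacyc.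

Definition good (Y : V -> Prop) := exists h, legal h /\ forall v, comp h v -> Y v.
Definition Down x y a b := adj a b /\ good (Br a b) /\ (forall v, Br a b v -> Br x y v) /\ ~ Br a b y.

Lemma DownAt x y h : adj x y -> legal h -> (forall v, comp h v -> Br x y v) ->
  exists z, Down x y (pos h) z.
Proof.
  intros Hxy Hl Htrap. set (r := pos h).
  destruct (PL h Hl) as (z1 & z2 & Hne & A1 & A2 & G1 & G2). fold r in A1, A2, G1, G2.
  assert (mk : forall z, adj r z -> good_in h (Br r z) -> ~ Br r z y -> Down x y r z).
  { intros z Hz [h' [Hl' Hh']] Hy.
    assert (Hr : Br x y r) by (apply Htrap, rt_refl).
    destruct (Hh' (pos h') (rt_refl _ _ _)) as [Hp1 Hp2].
    assert (HzD : Br x y z).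
    { apply NNPP; intro Hn. destruct (EOx x y r z Hz Hr Hn) as [-> ->].
      apply (DJx x y (pos h') Hxy); auto. }
    split; [auto|split; [|split; [|auto]]].
    - exists h'; split; auto. intros v Hv; apply (Hh' v Hv).
    - intros v Hv. apply NNPP; intro Hn.
      destruct (crossing _ (Br x y) z v Hv HzD Hn) as (a1 & b1 & Hc & Hs & Ha & Hb).
      destruct (EOx x y a1 b1 (proj1 Hs) Ha Hb) as [-> ->]. apply Hy. exact Hc. }
  destruct (classic (Br r z1 y)) as [H1|H1]; [|exists z1; apply mk; auto].
  destruct (classic (Br r z2 y)) as [H2|H2]; [|exists z2; apply mk; auto].
  exfalso. apply (SBx r z1 z2 y); auto.
Qed.

Lemma KL x y : adj x y -> good (Br x y) -> exists a1 b1 a2 b2,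
  Down x y a1 b1 /\ Down x y a2 b2 /\ (forall v, Br a1 b1 v -> Br a2 b2 v -> False).
Proof.
  intros Hxy [h0 [Hl0 Htr0]]. apply NNPP; intro Hno.
  assert (NT : forall a1 b1 a2 b2, Down x y a1 b1 -> Down x y a2 b2 ->
            exists v, Br a1 b1 v /\ Br a2 b2 v).
  { intros a1 b1 a2 b2 D1 D2. apply NNPP; intro Hn. apply Hno.
    exists a1, b1, a2, b2. split; auto. split; auto. intros v H1 H2. apply Hn; eauto. }
  set (r0 := pos h0).
  destruct (DownAt x y h0 Hxy Hl0 Htr0) as [z0 D0]. fold r0 in D0.
  assert (Hrz0 : adj r0 z0) by apply D0.
  assert (HE : exists e1 e2, G h0 e1 e2 /\ ~ G ((e1, e2) :: h0) r0 z0 /\ ~ G ((e1, e2) :: h0) z0 r0).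
  { destruct (classic (G h0 r0 z0)) as [H|H].
    - exists r0, z0. split; auto. split; [apply G_head|apply G_head'].
    - destruct (has_edge h0 Hl0) as [y1 Hy1]. exists r0, y1. split; auto.
      split; intro H'; apply H; [eapply G_cons; eauto|apply G_sym; eapply G_cons; eauto]. }
  destruct HE as (e1 & e2 & He & Hn1 & Hn2).
  set (h1 := (e1, e2) :: h0).
  assert (Hl1 : legal h1) by (constructor; auto).
  set (Anc := fun u => exists z, adj u z /\ Br u z r0 /\ ~ Br u z y).
  assert (FUT : forall l, legal (l ++ h1) -> pos (l ++ h1) = r0 \/ Anc (pos (l ++ h1))).
  { intros l Hl. set (r'' := pos (l ++ h1)).
    assert (Hreach : crt (G h1) r0 r'')
      by (eapply rt_trans; [apply (step_pos e1 e2 h0 Hl1)|apply (pos_reach l h1 Hl)]).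
    assert (HB0 : Br z0 r0 r'').
    { unfold Submission.Br. eapply crt_mono; [|exact Hreach]. intros a b Hab.
      unfold Submission.Av. split; [eapply G_adj; eauto|].
      split; intros [-> ->]; [apply Hn2|apply Hn1]; exact Hab. }
    assert (Htrap : forall v, comp (l ++ h1) v -> Br x y v).
    { intros v Hv. apply Htr0. apply (comp_mono_step e1 e2); auto.
      apply (comp_mono l h1); auto. }
    destruct (DownAt x y (l ++ h1) Hxy Hl Htrap) as [z'' D'']. fold r'' in D''.
    destruct (NT _ _ _ _ D'' D0) as (v & Hv1 & Hv2).
    destruct (classic (r'' = r0)) as [Heq|Hneq]; [left; auto|].
    destruct (classic (Br r'' z'' r0)) as [Hin|Hnin].
    { right. exists z''. split; [apply D''|]. split; auto. apply D''. }
    exfalso.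
    assert (Hz0 : ~ Br r'' z'' z0).
    { intro H. destruct (EIx r'' z'' r0 z0 Hrz0 Hnin H) as [? _]. auto. }
    destruct (crossing _ (fun w => ~ Br r'' z'' w) z0 v Hv2 Hz0 ltac:(tauto))
      as (a1 & b1 & Hc & Hs & Ha & Hb).
    apply NNPP in Hb. destruct (EIx r'' z'' a1 b1 (proj1 Hs) Ha Hb) as [-> _].
    apply (DJx r0 z0 r'' Hrz0); auto. }
  assert (Hr0 : Br x y r0) by (apply Htr0, rt_refl).
  assert (HW : crt adj y r0) by (eapply crt_mono; [|exact Hr0]; intros a b Hab; apply Hab).
  destruct (crt_walk _ _ _ HW) as (W & HWw & HWl).
  assert (W_anc : forall u z, adj u z -> Br u z r0 -> ~ Br u z y -> In (u, z) (pairs y W)).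
  { intros u z Huz Hr Hy.
    destruct (list_cross _ (Br u z) y W HWw Hy ltac:(rewrite HWl; exact Hr))
      as (a & b & Hin & Ha & Hb & Hab).
    destruct (EIx u z a b Hab Ha Hb) as [-> ->]. exact Hin. }
  assert (KI : forall E, exists l, legal (l ++ h1) /\ forall a b, In (a, b) E -> ~ G (l ++ h1) a b).
  { induction E as [|[a b] E IH].
    - exists []. split; [auto|intros a b []].
    - destruct IH as (l & Hl & Habs).
      destruct (classic (G (l ++ h1) a b)) as [Hg|Hg].
      + exists ((a, b) :: l). split; [constructor; auto|].
        intros a' b' [Heq|Hin]; [inversion Heq; subst; apply G_head|].
        intro H'; apply (Habs a' b' Hin); eapply G_cons; eauto.
      + exists l. split; auto. intros a' b' [Heq|Hin]; [inversion Heq; subst; auto|auto]. }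
  destruct (KI (pairs y W)) as (l & Hl2 & Habs).
  set (h2 := l ++ h1). set (u := pos h2).
  destruct (has_edge h2 Hl2) as [y2 Hy2].
  destruct (move h2 u y2 Hl2 Hy2) as (Hne & Hct & _).
  set (u' := pos ((u, y2) :: h2)) in *.
  assert (Hcr : crt (G h2) u u') by (eapply crt_mono; [|apply ct_crt; exact Hct]; apply G_cons).
  assert (Hcr' : crt (G h2) u' u) by (apply crt_rev; auto; apply G_sym).
  assert (Hu : u = r0 \/ Anc u) by (apply FUT; auto).
  assert (Hu' : u' = r0 \/ Anc u') by (apply (FUT ((u, y2) :: l)); constructor; auto).
  assert (Cut : forall v z w, adj v z -> Br v z r0 -> ~ Br v z y -> crt (G h2) v w -> ~ Br v z w).
  { intros v z w Hvz Hr Hy Hc Hw.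
    destruct (crossing _ (fun t => ~ Br v z t) v w Hc (Fx v z Hvz) ltac:(tauto))
      as (a1 & b1 & _ & Hs & Ha & Hb).
    apply NNPP in Hb. destruct (EIx v z a1 b1 (G_adj _ _ _ Hs) Ha Hb) as [-> ->].
    apply (Habs v z (W_anc v z Hvz Hr Hy)). exact Hs. }
  assert (TA : forall u z u' z', adj u z -> Br u z r0 -> adj u' z' -> Br u' z' r0 -> u <> u' ->
            ~ Br u' z' u -> Br u z u').
  { intros a z a' z' Haz Hr Ha'z' Hr' Hne' Hn.
    assert (Hz : ~ Br a' z' z).
    { intro H. destruct (EIx a' z' a z Haz Hn H) as [? _]; auto. }
    destruct (crossing _ (fun t => ~ Br a' z' t) z r0 Hr Hz ltac:(tauto))
      as (a1 & b1 & Hc & Hs & Ha & Hb).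
    apply NNPP in Hb. destruct (EIx a' z' a1 b1 (proj1 Hs) Ha Hb) as [-> _]. exact Hc. }
  destruct Hu as [Hu|(z & Hz1 & Hz2 & Hz3)]; destruct Hu' as [Hu'|(z' & Hz1' & Hz2' & Hz3')].
  - apply Hne. fold u u'. congruence.
  - apply (Cut u' z' u Hz1' Hz2' Hz3' Hcr'). rewrite Hu. exact Hz2'.
  - apply (Cut u z u' Hz1 Hz2 Hz3 Hcr). rewrite Hu'. exact Hz2.
  - destruct (classic (Br u z u')) as [B1|B1]; [exact (Cut u z u' Hz1 Hz2 Hz3 Hcr B1)|].
    destruct (classic (Br u' z' u)) as [B2|B2]; [exact (Cut u' z' u Hz1' Hz2' Hz3' Hcr' B2)|].
    apply B1. apply (TA u z u' z'); auto.
Qed.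

End Cat.


Lemma LL (w w' : list LR) : w = w' \/ (exists t s, w' = w ++ t :: s) \/ (exists t s, w = w' ++ t :: s) \/
  (exists p s s', w = p ++ L :: s /\ w' = p ++ R :: s') \/
  (exists p s s', w = p ++ R :: s /\ w' = p ++ L :: s').
Proof.
  revert w'; induction w as [|t w IH]; intros [|t' w'].
  - left; auto.
  - right; left; exists t', w'; auto.
  - right; right; left; exists t, w; auto.
  - destruct (classic (t = t')) as [<-|Hne].
    + destruct (IH w') as [->|[(t0&s&->)|[(t0&s&->)|[(p&s&s'&->&->)|(p&s&s'&->&->)]]]].
      * left; auto.
      * right; left; exists t0, s; auto.
      * right; right; left; exists t0, s; auto.
      * right; right; right; left; exists (t :: p), s, s'; auto.
      * right; right; right; right; exists (t :: p), s, s'; auto.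
    + destruct t, t'; try congruence.
      * right; right; right; left; exists [], w, w'; auto.
      * right; right; right; right; exists [], w, w'; auto.
Qed.

Section M.
Variable V : Type.
Variable adj : V -> V -> Prop.
Hypothesis Hsym : forall x y, adj x y -> adj y x.
Variable c0 : V.
Variable sigma : history V -> V.
Hypothesis Hwin : cat_strategy_wins V adj c0 sigma.
Hypothesis Hirr : forall x, ~ adj x x.
Hypothesis Hacyc : ~ has_cycle V adj.
Hypothesis Hconn : connected V adj.
Variable y0 : V.
Hypothesis Hy0 : adj c0 y0.
Notation crt := (clos_refl_trans V).
Notation Br := (Br V adj).
Notation Av := (Av V adj).
Notation Down := (Down V adj c0 sigma).
Notation good := (good V adj c0 sigma).

Let Fx := F V adj Hsym Hirr Hacyc.
Let EIx := edge_in V adj Hsym.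
Let EOx := edge_out V adj Hsym.

Definition KLspec (p : V * V) (q : (V * V) * (V * V)) : Prop :=
  Down (fst p) (snd p) (fst (fst q)) (snd (fst q)) /\
  Down (fst p) (snd p) (fst (snd q)) (snd (snd q)) /\
  (forall v, Br (fst (fst q)) (snd (fst q)) v -> Br (fst (snd q)) (snd (snd q)) v -> False).

Definition child (p : V * V) := epsilon (inhabits (p, p)) (KLspec p).
Definition pick p t := match t with L => fst (child p) | R => snd (child p) end.
Fixpoint g (w : list LR) : V * V := match w with [] => (y0, c0) | t :: w' => pick (g w') t end.
Definition st w := g (rev w).
Lemma st_snoc w t : st (w ++ [t]) = pick (st w) t.
Proof. unfold st; rewrite rev_unit; reflexivity. Qed.
Definition cc w := fst (st w).
Definition dd w := snd (st w).

Lemma g_inv w : adj (fst (g w)) (snd (g w)) /\ good (Br (fst (g w)) (snd (g w))) /\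
  KLspec (g w) (child (g w)).
Proof.
  assert (base : forall p, adj (fst p) (snd p) -> good (Br (fst p) (snd p)) -> KLspec p (child p)).
  { intros [x y] Hxy Hg. unfold child. apply epsilon_spec.
    destruct (KL V adj Hsym c0 sigma Hwin Hirr Hacyc x y Hxy Hg) as (a1&b1&a2&b2&H).
    exists ((a1, b1), (a2, b2)). exact H. }
  induction w as [|t w IH].
  - simpl. assert (Ha : adj y0 c0) by auto.
    assert (Hg : good (Br y0 c0)).
    { exists [(c0, y0)]. split.
      - constructor; [constructor|]. unfold cur_adj; simpl; tauto.
      - intros v Hv. unfold comp in Hv. unfold Submission.Br. eapply rt_trans.
        + eapply crt_mono; [|apply (step_pos V adj c0 sigma Hwin c0 y0 [])].
          * intros a b Hab. apply (G_Av V adj c0 y0 [] a b Hab).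
          * constructor; [constructor|]. unfold cur_adj; simpl; tauto.
        + eapply crt_mono; [|exact Hv]. intros a b Hab. apply (G_Av V adj c0 y0 [] a b Hab). }
    split; [exact Ha|split; [exact Hg|apply (base (y0, c0)); auto]].
  - destruct IH as (H1 & H2 & H3). simpl.
    assert (Hc : adj (fst (pick (g w) t)) (snd (pick (g w) t)) /\ good (Br (fst (pick (g w) t)) (snd (pick (g w) t)))).
    { destruct t; simpl; destruct H3 as (D1 & D2 & _); [destruct D1 as (?&?&_)|destruct D2 as (?&?&_)]; auto. }
    destruct Hc as [Hc1 Hc2]; split; [exact Hc1|split; [exact Hc2|apply base; auto]].
Qed.

Lemma CHD w t : Down (cc w) (dd w) (cc (w ++ [t])) (dd (w ++ [t])).
Proof.
  unfold cc, dd. rewrite st_snoc. destruct (g_inv (rev w)) as (_&_&H). fold (st w) in H.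
  destruct t; apply H.
Qed.

Lemma CH2 w v : Br (cc (w ++ [L])) (dd (w ++ [L])) v -> Br (cc (w ++ [R])) (dd (w ++ [R])) v -> False.
Proof.
  unfold cc, dd. rewrite !st_snoc. destruct (g_inv (rev w)) as (_&_&H). fold (st w) in H.
  apply H.
Qed.

Definition NE (p q a b : V) := ~ (a = p /\ b = q) /\ ~ (a = q /\ b = p).
Definition R3 w a b := Av (cc w) (dd w) a b /\ NE (cc (w ++ [L])) (dd (w ++ [L])) a b /\
  NE (cc (w ++ [R])) (dd (w ++ [R])) a b.
Definition B w v := crt (R3 w) (dd w) v.
Definition S w v := Br (cc w) (dd w) v.

Lemma nest s : forall w v, S (w ++ s) v -> S w v.
Proof.
  induction s as [|t s IH]; intros w v H.
  - rewrite app_nil_r in H; auto.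
  - replace (w ++ t :: s) with ((w ++ [t]) ++ s) in H by (rewrite <- app_assoc; reflexivity).
    apply IH in H. apply (CHD w t); auto.
Qed.

Lemma B_S w v : B w v -> S w v.
Proof. apply crt_mono. intros a b H; apply H. Qed.

Lemma B_notchild w t v : B w v -> S (w ++ [t]) v -> False.
Proof.
  intros Hb Hs. destruct (CHD w t) as (Hab & _ & _ & Hy). apply Hy.
  eapply Br_back; [auto|exact Hs|]. eapply crt_mono; [|exact Hb].
  intros a b (H1 & H2 & H3). destruct t; unfold Submission.Av, NE in *; tauto.
Qed.

Lemma reach_a x y a b a' b' : adj x y -> Down x y a b -> Down x y a' b' ->
  (forall v, Br a b v -> Br a' b' v -> False) ->
  crt (fun p q => Av x y p q /\ NE a b p q /\ NE a' b' p q) y a.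
Proof.
  intros Hxy (Hab & _ & Hsub & Hy) (Hab' & _ & Hsub' & Hy') Hdis.
  assert (aD : Br x y a).
  { apply NNPP; intro Hn. destruct (EIx x y a b Hab Hn (Hsub b (Br_refl _ _ _ _))) as [-> ->].
    apply Hy, Br_refl. }
  assert (ans : ~ Br a' b' a).
  { intro H. assert (Hb : ~ Br a' b' b) by (intro H'; apply (Hdis b); auto; apply Br_refl).
    destruct (EOx a' b' a b Hab H Hb) as [-> ->].
    destruct (CP V adj a' b' x Hconn) as [Hx|Hx]; apply (Fx x y Hxy); auto. }
  destruct (walk_nodup _ _ _ aD) as (P & HPw & HPl & HPn).
  assert (Hav : forall p q s t, crt (fun u v => Av x y u v /\ u <> p /\ v <> p) s t -> crt (Av p q) s t).
  { intros p q s t H. apply avoid_vertex_Br. eapply crt_mono; [|exact H].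
    intros u v (H1&H2&H3). split; auto. apply H1. }
  cut (walk V (fun p q => Av x y p q /\ NE a b p q /\ NE a' b' p q) y P).
  { intros Hw. pose proof (walk_crt _ _ _ Hw) as Hc. rewrite HPl in Hc. exact Hc. }
  apply walk_strengthen; auto.
  intros p q Hin. destruct (NL _ _ _ _ _ HPw HPn Hin) as [Pre Suf]. rewrite HPl in Suf.
  split; split.
  - intros [Hp Hq]; subst p q. apply (avoid_end _ _ _ _ Suf); auto. intro; subst; eapply Hirr; eauto.
  - intros [Hp Hq]; subst p q. apply Hy. eapply Br_back; [auto|apply Br_refl|]. apply (Hav a b). exact Pre.
  - intros [Hp Hq]; subst p q. apply ans. eapply Br_trans; [apply Br_refl|]. apply (Hav a' b'). exact Suf.
  - intros [Hp Hq]; subst p q. apply Hy'. eapply Br_back; [auto|apply Br_refl|]. apply (Hav a' b'). exact Pre.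
Qed.

Lemma Inv w : adj (cc w) (dd w).
Proof. unfold cc, dd, st. apply g_inv. Qed.

Lemma child_adj w t : B w (cc (w ++ [t])) /\ B (w ++ [t]) (dd (w ++ [t])) /\
  adj (cc (w ++ [t])) (dd (w ++ [t])).
Proof.
  split; [|split; [apply rt_refl|apply (CHD w t)]].
  unfold B. destruct t.
  - exact (reach_a _ _ _ _ _ _ (Inv w) (CHD w L) (CHD w R) (CH2 w)).
  - eapply crt_mono; [|exact (reach_a _ _ _ _ _ _ (Inv w) (CHD w R) (CHD w L)
                               (fun v H1 H2 => CH2 w v H2 H1))].
    intros a b; unfold R3; tauto.
Qed.

Lemma minor : is_minor (list LR) Bomega_adj V adj.
Proof.
  exists B. split; [|split; [|split]].
  - intros w. exists (dd w). apply rt_refl.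
  - intros w w' v H1 H2.
    destruct (LL w w') as [->|[(t&s&->)|[(t&s&->)|[(p&s&s'&->&->)|(p&s&s'&->&->)]]]]; auto; exfalso.
    + apply B_S in H2. replace (w ++ t :: s) with ((w ++ [t]) ++ s) in H2
        by (rewrite <- app_assoc; reflexivity).
      apply nest in H2. exact (B_notchild _ _ _ H1 H2).
    + apply B_S in H1. replace (w' ++ t :: s) with ((w' ++ [t]) ++ s) in H1
        by (rewrite <- app_assoc; reflexivity).
      apply nest in H1. exact (B_notchild _ _ _ H2 H1).
    + apply B_S in H1, H2.
      replace (p ++ L :: s) with ((p ++ [L]) ++ s) in H1 by (rewrite <- app_assoc; reflexivity).
      replace (p ++ R :: s') with ((p ++ [R]) ++ s') in H2 by (rewrite <- app_assoc; reflexivity).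
      apply nest in H1, H2. exact (CH2 p v H1 H2).
    + apply B_S in H1, H2.
      replace (p ++ R :: s) with ((p ++ [R]) ++ s) in H1 by (rewrite <- app_assoc; reflexivity).
      replace (p ++ L :: s') with ((p ++ [L]) ++ s') in H2 by (rewrite <- app_assoc; reflexivity).
      apply nest in H1, H2. exact (CH2 p v H2 H1).
  - intros w u v Hu Hv.
    set (T := fun a b => adj a b /\ B w a /\ B w b).
    assert (HT : forall z, B w z -> crt T (dd w) z).
    { intros z Hz. eapply crt_mono; [|exact (crt_restrict _ _ _ Hz)].
      intros a b (H1 & H2 & H3). split; [exact (proj1 (proj1 H1))|split; auto]. }
    eapply rt_trans; [|apply HT; exact Hv].
    apply crt_rev; [|apply HT; exact Hu].
    intros a b (H1&H2&H3); split; auto.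
  - intros w w' [(t & ->)|(t & ->)].
    + destruct (child_adj w t) as (H1&H2&H3). exists (cc (w ++ [t])), (dd (w ++ [t])). auto.
    + destruct (child_adj w' t) as (H1&H2&H3). exists (dd (w' ++ [t])), (cc (w' ++ [t])).
      split; [auto|split; auto].
Qed.

End M.

Lemma dir2 V adj : is_tree V adj -> cat_win V adj -> is_minor (list LR) Bomega_adj V adj.
Proof.
  intros ([Hsym Hirr] & Hconn & Hacyc) (c0 & sigma & Hwin).
  destruct (proj1 Hwin) as [y0 Hy0].
  exact (minor V adj Hsym c0 sigma Hwin Hirr Hacyc Hconn y0 Hy0).
Qed.


Section D1.
Variable V : Type.
Variable adj : V -> V -> Prop.
Hypothesis Hsym : forall x y, adj x y -> adj y x.
Variable B : list LR -> V -> Prop.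
Hypothesis Bdis : forall w w' v, B w v -> B w' v -> w = w'.
Hypothesis Bconn : forall w u v, B w u -> B w v ->
       clos_refl_trans V (fun x y => adj x y /\ B w x /\ B w y) u v.
Hypothesis Badj : forall w w', Bomega_adj w w' -> exists u v, B w u /\ B w' v /\ adj u v.
Variable v0 : V.
Notation crt := (clos_refl_trans V).
Notation G := (cur_adj V adj).

Definition Rg w v := exists s, B (w ++ s) v.
Definition E w t : V * V :=
  epsilon (inhabits (v0, v0)) (fun p => B w (fst p) /\ B (w ++ [t]) (snd p) /\ adj (fst p) (snd p)).
Lemma E_spec w t : B w (fst (E w t)) /\ B (w ++ [t]) (snd (E w t)) /\ adj (fst (E w t)) (snd (E w t)).
Proof.
  unfold E. apply (epsilon_spec (inhabits (v0, v0))
    (fun p => B w (fst p) /\ B (w ++ [t]) (snd p) /\ adj (fst p) (snd p))).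
  destruct (Badj w (w ++ [t]) (or_introl (ex_intro _ t eq_refl))) as (u & v & H).
  exists (u, v). exact H.
Qed.
Definition xw w := fst (E w L).
Definition Lpart w a b := Rg w a /\ Rg w b /\ (Rg (w ++ [L]) a \/ Rg (w ++ [L]) b).
Fixpoint stt (h : history V) : list LR :=
  match h with
  | [] => []
  | (a, b) :: h' => if excluded_middle_informative (Lpart (stt h') a b) then stt h' ++ [R] else stt h' ++ [L]
  end.
Definition sig (h : history V) := xw (stt h).

Lemma B_Rg w v : B w v -> Rg w v.
Proof. intros H; exists []; rewrite app_nil_r; auto. Qed.

Lemma Rg_child w t v : Rg (w ++ [t]) v -> Rg w v.
Proof. intros [s H]; exists (t :: s). rewrite <- app_assoc in H. exact H. Qed.

Lemma Rg_disj w v : Rg (w ++ [L]) v -> Rg (w ++ [R]) v -> False.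
Proof.
  intros [s H1] [s' H2]. pose proof (Bdis _ _ _ H1 H2) as H.
  rewrite <- !app_assoc in H. apply app_inv_head in H. discriminate.
Qed.

Lemma B_notRgL w v : B w v -> Rg (w ++ [L]) v -> False.
Proof.
  intros H1 [s H2]. pose proof (Bdis _ _ _ H1 H2) as H.
  apply (f_equal (@length LR)) in H. rewrite !length_app in H. simpl in H. lia.
Qed.

Lemma BR_notRgL w v : B (w ++ [R]) v -> Rg (w ++ [L]) v -> False.
Proof.
  intros H1 [s H2]. pose proof (Bdis _ _ _ H1 H2) as H.
  rewrite <- !app_assoc in H. apply app_inv_head in H. discriminate.
Qed.

Lemma Lpart_sym w a b : Lpart w a b -> Lpart w b a.
Proof. unfold Lpart; tauto. Qed.

Definition InvD (h : history V) := forall a b, In (a, b) h -> ~ (Rg (stt h) a /\ Rg (stt h) b).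

Lemma OK h a b p q : InvD h -> adj p q -> Rg (stt h) p -> Rg (stt h) q ->
  (Lpart (stt h) p q <-> ~ Lpart (stt h) a b) -> G ((a, b) :: h) p q.
Proof.
  intros HI Hpq Hp Hq Hx. split; auto. split; simpl.
  - intros [Heq|Hin]; [inversion Heq; subst; tauto|]. apply (HI p q Hin); auto.
  - intros [Heq|Hin]; [inversion Heq; subst|].
    + assert (Lpart (stt h) p q <-> Lpart (stt h) q p) by (split; apply Lpart_sym). tauto.
    + apply (HI q p Hin); auto.
Qed.

Lemma InvD_legal h : legal_history V adj h -> InvD h.
Proof.
  intros Hl; induction Hl as [|h a b Hl IH Hab].
  - intros a b [].
  - unfold InvD; simpl. destruct (excluded_middle_informative (Lpart (stt h) a b)) as [HL|HL].
    + intros a' b' [Heq|Hin] [H1 H2].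
      * inversion Heq; subst. destruct HL as (_&_&[H|H]); eapply Rg_disj; eauto.
      * apply (IH a' b' Hin). split; eapply Rg_child; eauto.
    + intros a' b' [Heq|Hin] [H1 H2].
      * inversion Heq; subst. apply HL. split; [eapply Rg_child; eauto|].
        split; [eapply Rg_child; eauto|]. auto.
      * apply (IH a' b' Hin). split; eapply Rg_child; eauto.
Qed.

Lemma ct_of (R : V -> V -> Prop) a b c d : crt R a b -> R b c -> crt R c d -> clos_trans V R a d.
Proof.
  intros H1 H2 H3. apply clos_rt_rtn1 in H1. apply clos_rt_rt1n in H3.
  assert (clos_trans V R b d).
  { clear H1. revert b H2. induction H3 as [|x y z Hxy Hyz IH]; intros b Hb.
    - apply t_step; auto.
    - eapply t_trans; [apply t_step; exact Hb|]. apply IH; auto. }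
  clear H3 H2. induction H1 as [|y z Hyz H1 IH]; auto.
  apply IH. eapply t_trans; [apply t_step; exact Hyz|]. auto.
Qed.

Lemma path h a b : legal_history V adj h -> G h a b ->
  clos_trans V (G ((a, b) :: h)) (xw (stt h)) (xw (stt ((a, b) :: h))).
Proof.
  intros Hl Hab. pose proof (InvD_legal h Hl) as HI. set (w := stt h) in *.
  simpl. fold w. destruct (excluded_middle_informative (Lpart w a b)) as [HL|HL].
  - destruct (E_spec w L) as (A1 & _ & _). destruct (E_spec w R) as (A2 & A3 & A4).
    destruct (E_spec (w ++ [R]) L) as (A5 & _ & _).
    assert (Hno : forall p, B w p \/ B (w ++ [R]) p -> Rg w p /\ ~ Rg (w ++ [L]) p).
    { intros p [Hp|Hp]; split.
      - apply B_Rg; auto.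
      - intro; eapply B_notRgL; eauto.
      - eapply Rg_child, B_Rg; eauto.
      - intro; eapply BR_notRgL; eauto. }
    assert (Hok : forall p q, adj p q -> (B w p \/ B (w ++ [R]) p) -> (B w q \/ B (w ++ [R]) q) ->
              G ((a, b) :: h) p q).
    { intros p q Hpq Hp Hq. destruct (Hno p Hp), (Hno q Hq).
      apply OK; auto. unfold Lpart. tauto. }
    apply (ct_of _ _ (fst (E w R)) (snd (E w R))).
    + eapply crt_mono; [|exact (Bconn w _ _ A1 A2)]. intros p q (H1&H2&H3); apply Hok; auto.
    + apply Hok; auto.
    + eapply crt_mono; [|exact (Bconn _ _ _ A3 A5)]. intros p q (H1&H2&H3); apply Hok; auto.
  - destruct (E_spec w L) as (A1 & A2 & A3).
    destruct (E_spec (w ++ [L]) L) as (A5 & _ & _).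
    assert (Hok : forall p q, adj p q -> (B w p \/ B (w ++ [L]) p) -> B (w ++ [L]) q ->
              G ((a, b) :: h) p q).
    { intros p q Hpq Hp Hq. apply OK; auto.
      - destruct Hp; [apply B_Rg|eapply Rg_child, B_Rg]; eauto.
      - eapply Rg_child, B_Rg; eauto.
      - unfold Lpart. split; [tauto|]. intros _.
        split; [destruct Hp; [apply B_Rg|eapply Rg_child, B_Rg]; eauto|].
        split; [eapply Rg_child, B_Rg; eauto|]. right; apply B_Rg; auto. }
    apply (ct_of _ _ (fst (E w L)) (snd (E w L))).
    + apply rt_refl.
    + apply Hok; auto.
    + eapply crt_mono; [|exact (Bconn _ _ _ A2 A5)]. intros p q (H1&H2&H3); apply Hok; auto.
Qed.

Lemma xw_ne w t : xw (w ++ [t]) <> xw w.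
Proof.
  intros H. destruct (E_spec w L) as (A1&_&_). destruct (E_spec (w ++ [t]) L) as (A2&_&_).
  unfold xw in H. rewrite H in A2. pose proof (Bdis _ _ _ A1 A2) as Heq.
  apply (f_equal (@length LR)) in Heq. rewrite length_app in Heq. simpl in Heq. lia.
Qed.

Lemma cat_wins : cat_strategy_wins V adj (xw []) sig.
Proof.
  split.
  - destruct (E_spec [] L) as (_&_&H). eexists; exact H.
  - intros h a b Hl Hab.
    assert (Hp : cat_pos V (xw []) sig h = xw (stt h)) by (destruct h; reflexivity).
    simpl. rewrite Hp. unfold sig.
    pose proof (path h a b Hl Hab) as Hc.
    split; [|split; [|exact Hc]].
    + apply clos_trans_t1n in Hc. destruct Hc as [y Hy|y z Hy _]; exists y; auto.
    + simpl. destruct (excluded_middle_informative _); apply xw_ne.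
Qed.
End D1.


Lemma dir1 V adj : is_tree V adj -> is_minor (list LR) Bomega_adj V adj -> cat_win V adj.
Proof.
  intros ([Hsym _] & _ & _) (B & Bne & Bdis & Bconn & Badj).
  destruct (Bne []) as [v0 _].
  exists (xw V adj B v0 []), (sig V adj B v0).
  apply cat_wins; auto.
Qed.


Theorem mainTheorem12 (V : Type) (adj : V -> V -> Prop) :
  is_tree V adj ->
  (cat_win V adj <-> is_minor (list LR) Bomega_adj V adj).
Proof.
  intros Ht. split; [apply dir2; auto|apply dir1; auto].
Qed.
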